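(* Let $K$ and $L$ be compact Hausdorff spaces and $\phi:K\to L$ a continuous surjection. If $K$ has the extension property and $L$ is scattered of finite height, then the Banach subalgebra $\phi^*C(L)=\{f\circ\phi: f\in C(L)\}$ of $C(K)$ is complemented in $C(K)$; equivalently, $\phi$ admits an averaging operator, i.e., a bounded linear operator $P:C(K)\to C(L)$ with $P(f\circ\phi)=f$ for all $f\in C(L)$.
   Context: $C(K)$ denotes the Banach space of real-valued continuous functions on $K$ with the supremum norm. For a closed set $F\subseteq K$, an extension operator for $F$ in $K$ is a bounded linear map $E:C(F)\to C(K)$ such that $E(f)|_F=f$ for all $f\in C(F)$. $K$ has the extension property if every nonempty closed subset of $K$ admits an extension operator in $K$. A scattered space $L$ has finite height if $L^{(n)}=\emptyset$ for some finite $n$, where $L^{(n)}$ denotes the $n$-th Cantor--Bendixson derivative (iterated set of non-isolated points). *)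

(* Defs.v *)
From HB Require Import structures.
From mathcomp Require Import all_boot all_order all_algebra.
From mathcomp Require Import all_classical all_reals all_analysis.
Set Implicit Arguments. Unset Strict Implicit. Unset Printing Implicit Defensive.
Import Order.TTheory GRing.Theory Num.Theory.
Import numFieldNormedType.Exports.
Local Open Scope classical_set_scope.
Local Open Scope ring_scope.

(* Elements of C(F), for F a subset of K, are represented by functions
   f : K -> R whose restriction to F is continuous (w.r.t. the subspace
   topology); operators defined on C(F) are required to depend only on
   the values on F.  The sup norm ||f||_F <= c is written
   (forall y, F y -> `|f y| <= c). *)

Definition CF {R : realType} {K : topologicalType} (F : set K) (f : K -> R) :=
  {within F, continuous f}.

Definition bounded_linear_op {R : realType} {K M : topologicalType}
  (F : set K) (G : set M) (E : (K -> R) -> (M -> R)) : Prop :=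
  [/\ (forall f g, CF F f -> (forall x, F x -> f x = g x) -> E f = E g),
      (forall f, CF F f -> CF G (E f)),
      (forall (a : R) f g, CF F f -> CF F g ->
          E (fun x => a * f x + g x) = (fun y => a * E f y + E g y)) &
      (exists C : R, forall f (c : R), CF F f ->
          (forall x, F x -> `|f x| <= c) ->
          forall y, G y -> `|E f y| <= C * c)].

Definition extension_operator {R : realType} {K : topologicalType}
  (F : set K) (E : (K -> R) -> (K -> R)) : Prop :=
  bounded_linear_op F setT E /\
  (forall f, CF F f -> forall x, F x -> E f x = f x).

Definition extension_property (R : realType) (K : topologicalType) : Prop :=
  forall F : set K, closed F -> F !=set0 ->
    exists E : (K -> R) -> (K -> R), extension_operator F E.

Definition isolated_in {K : topologicalType} (A : set K) (x : K) : Prop :=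
  A x /\ exists U, nbhs x U /\ U `&` A `<=` [set x].

Definition scattered (K : topologicalType) : Prop :=
  forall A : set K, A !=set0 -> exists x, isolated_in A x.

Definition CB_derivative {K : topologicalType} (A : set K) : set K :=
  [set x | A x /\ ~ isolated_in A x].

Definition CB_iter {K : topologicalType} (n : nat) : set K :=
  iter n (@CB_derivative K) setT.

Definition finite_height (K : topologicalType) : Prop :=
  exists n : nat, @CB_iter K n = set0.

(* Main.v *)
Require Import Defs.
From HB Require Import structures.
From mathcomp Require Import all_boot all_order all_algebra.
From mathcomp Require Import all_classical all_reals all_analysis.
From mathcomp Require Import ring lra.
Import Order.TTheory GRing.Theory Num.Theory.
Import numFieldNormedType.Exports.
Local Open Scope classical_set_scope.
Local Open Scope ring_scope.

Lemma within_near (R : realType) (T : topologicalType) (A : set T) (f : T -> R) x e :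
  {within A, continuous f} -> A x -> 0 < e ->
  nbhs x (fun t => A t -> `|f x - f t| < e).
Proof.
move=> /subspace_continuousP /(_ x) cf Ax e0.
have := (proj1 (cvgrPdist_lt _ _) (cf Ax)) e e0.
rewrite /= nearE /within /=. move=> H.
have := H (within_filter _ _). move=> H2. exact: (H2 (nbhs_filter x)).
Qed.

Lemma comp_within (T U V : topologicalType) (A : set T) (B : set U)
   (phi : T -> U) (g : U -> V) :
  continuous phi -> (forall x, A x -> B (phi x)) ->
  {within B, continuous g} -> {within A, continuous (g \o phi)}.
Proof.
move=> cphi AB /subspace_continuousP cg.
apply/subspace_continuousP => x Ax.
apply: (cvg_comp _ _ _ (cg _ (AB _ Ax))) => P /=.
rewrite /within /= => hP.
have := cphi x _ hP.
rewrite /= nbhs_simpl /=.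
apply: filterS => t /= H At; exact: H (AB _ At).
Qed.

Lemma closed_deriv (T : topologicalType) (A : set T) :
  closed A -> closed (CB_derivative A).
Proof.
move=> cA; rewrite -openC openE => z /=.
rewrite /CB_derivative /=.
have [Az|nAz] := pselect (A z); last first.
  move=> _; rewrite /interior.
  have oA : open (~` A) by rewrite openC.
  have Hn : nbhs z (~` A) by apply: open_nbhs_nbhs; split.
  by apply: filterS Hn => t /= nAt [].
move=> H.
have iz : isolated_in A z.
  by apply: contrapT => ni; apply: H.
case: iz => _ [U [nU UA]].
rewrite /interior; apply: filterS (nbhs_interior nU).
move=> t Ut [At nit]; apply: nit; split => //.
have tz : t = z by apply: UA; split => //; exact: interior_subset.
subst t; exists U; split => //.
Qed.

Lemma closed_CB (T : topologicalType) k : closed (@CB_iter T k).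
Proof.
elim: k => [|k IH]; first exact: closedT.
rewrite /CB_iter iterS; exact: closed_deriv.
Qed.

Lemma CB_sub (T : topologicalType) k : @CB_iter T k.+1 `<=` @CB_iter T k.
Proof. by rewrite /CB_iter iterS => x []. Qed.

Lemma closed_map_nbhs (K L : topologicalType) (phi : K -> L) (W : set K) y0 :
  compact [set: K] -> hausdorff_space L -> continuous phi ->
  open W -> (forall x, phi x = y0 -> W x) ->
  nbhs y0 (fun y => forall x, phi x = y -> W x).
Proof.
move=> cK hL cphi oW fW.
have cZ : compact (~` W) by apply: (subclosed_compact _ cK) => //; rewrite closedC.
have cI : compact (phi @` (~` W)).
  by apply: continuous_compact => //; exact: continuous_subspaceT.
have clI := compact_closed hL cI.
have oI : open (~` (phi @` (~` W))) by rewrite openC.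
have Hn : nbhs y0 (~` (phi @` (~` W))).
  apply: open_nbhs_nbhs; split => //.
  move=> [x nW px]; apply: nW; exact: fW.
apply: filterS Hn.
move=> y nI x pxy; apply: contrapT => nW; apply: nI; by exists x.
Qed.

Lemma ext_exists (R : realType) (K : topologicalType) (F : set K) :
  extension_property R K -> closed F ->
  exists E : (K -> R) -> (K -> R), extension_operator F E.
Proof.
move=> eK cF.
have [->|ne] := eqVneq F set0.
  exists (fun _ _ => 0); split; last by [].
  split.
  - by [].
  - move=> f _; apply: continuous_subspaceT; exact: cst_continuous.
  - by move=> a f g _ _; apply: funext => y; rewrite mulr0 addr0.
  - by exists 0 => f c _ _ y _; rewrite normr0 mul0r.
apply: eK => //; exact/set0P.
Qed.

Lemma CF_lin (R : realType) (T : topologicalType) (A : set T) (f g : T -> R) (a : R) :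
  CF A f -> CF A g -> CF A (fun x => a * f x + g x).
Proof.
move=> /subspace_continuousP cf /subspace_continuousP cg.
apply/subspace_continuousP => x Ax.
apply: cvgD; last exact: cg.
apply: cvgM; [exact: cvg_cst| exact: cf].
Qed.

Definition Claim (R : realType) {K L : topologicalType} (phi : K -> L) (k : nat) :=
  exists (P : (K -> R) -> (L -> R)) (C : R),
  [/\ (forall f g, CF (phi @^-1` CB_iter k) f ->
         (forall x, (phi @^-1` CB_iter k) x -> f x = g x) ->
         forall y, CB_iter k y -> P f y = P g y),
      (forall f, CF (phi @^-1` CB_iter k) f -> CF (CB_iter k) (P f)),
      (forall a f g, CF (phi @^-1` CB_iter k) f -> CF (phi @^-1` CB_iter k) g ->
         forall y, CB_iter k y -> P (fun x => a * f x + g x) y = a * P f y + P g y),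
      (forall f c, CF (phi @^-1` CB_iter k) f ->
         (forall x, (phi @^-1` CB_iter k) x -> `|f x| <= c) ->
         forall y, CB_iter k y -> `|P f y| <= C * c) &
      (forall g, CF (CB_iter k) g -> forall y, CB_iter k y -> P (g \o phi) y = g y)].

Lemma step (R : realType) (K L : topologicalType) (phi : K -> L) (s : L -> K) k :
  compact [set: K] -> hausdorff_space L -> continuous phi ->
  (forall y, phi (s y) = y) -> extension_property R K ->
  Claim R phi k.+1 -> Claim R phi k.
Proof.
move=> cK hL cphi hs eK [P [C [Pa Pb Pc Pd Pe]]].
set B := phi @^-1` CB_iter k.+1.
have cB : closed B.
  apply: preimage_closed; last exact: closed_CB.
  by move=> x _; apply: cphi.
have [E [[Ea Eb Ec [CE Ed]] Eext]] := ext_exists R K B eK cB.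
have sub : forall x, B x -> (phi @^-1` CB_iter k) x.
  by move=> x Bx; apply: CB_sub.
have CFsub : forall f : K -> R, CF (phi @^-1` CB_iter k) f -> CF B f.
  by move=> f cf; exact: (continuous_subspaceW sub cf).
have CFG : forall f : K -> R, CF (phi @^-1` CB_iter k) f -> CF B (P f \o phi).
  move=> f cf. have := (@comp_within K L R B (CB_iter k.+1) phi (P f) cphi (fun x Bx => Bx) (Pb f (CFsub f cf))). by [].
have sK : forall y, CB_iter k y -> (phi @^-1` CB_iter k) (s y).
  by move=> y Ly; rewrite /preimage /= hs.
pose Pn := fun (f : K -> R) (y : L) => if y \in CB_iter k.+1 then P f y
   else f (s y) - E f (s y) + E (P f \o phi) (s y).
exists Pn, (Num.max C (1 + CE + CE * C)); split.
- move=> f g cf fg y Ly; rewrite /Pn.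
  case: (boolP (y \in CB_iter k.+1)) => [/set_mem Hy|Hy].
    apply: Pa => //; [exact: CFsub | by move=> x Bx; apply: fg; apply: sub].
  rewrite (fg (s y) (sK y Ly)).
  rewrite (Ea f g (CFsub f cf)); last by move=> x Bx; apply: fg; apply: sub.
  rewrite (Ea (P f \o phi) (P g \o phi) (CFG f cf)) //.
  move=> x Bx /=; apply: Pa => //; [exact: CFsub | by move=> z Bz; apply: fg; apply: sub].
- move=> f cf; apply/subspace_continuousP => y0 Ly0.
  apply/cvgrPdist_lt => e e0.
  rewrite near_withinE.
  change (nbhs y0 (fun t => CB_iter k t -> `|Pn f y0 - Pn f t| < e)).
  have [Hy0|Hy0] := pselect (CB_iter k.+1 y0); last first.
    have iso : isolated_in (CB_iter k) y0.
      apply: contrapT => ni; apply: Hy0; rewrite /CB_iter iterS; split => //.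
    case: iso => _ [U [nU UL]].
    apply: filterS nU => t Ut Lt.
    have -> : t = y0 by apply: UL.
    by rewrite subrr normr0.
  have e2 : 0 < e / 2 by apply: divr_gt0.
  have e4 : 0 < e / 4 by apply: divr_gt0.
  have h1 := within_near _ _ _ _ _ _ (Pb f (CFsub f cf)) Hy0 e2.
  have ch : CF setT (E (P f \o phi)) := Eb _ (CFG f cf).
  have cEf := Eb f (CFsub f cf).
  pose S := fun x => (phi @^-1` CB_iter k) x ->
     `|f x - E f x| < e / 2 /\ `|P f y0 - E (P f \o phi) x| < e / 2.
  have hW : forall x, phi x = y0 -> S° x.
    move=> x px.
    have Bx : B x by rewrite /B /preimage /= px.
    have n1 := within_near _ _ _ _ _ _ cf (sub x Bx) e4.
    have n2 := within_near _ _ _ _ x _ cEf I e4.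
    have n3 := within_near _ _ _ _ x _ ch I e2.
    rewrite /interior /=.
    apply: filterS (filterI n1 (filterI n2 n3)) => t [a1 [a2 a3]] Kt.
    have fx : E f x = f x := Eext f (CFsub f cf) x Bx.
    have hx : E (P f \o phi) x = P f y0.
      by rewrite (Eext (P f \o phi) (CFG f cf) x Bx) /= px.
    split.
      have b1 := a1 Kt; have b2 := a2 I; rewrite fx in b2.
      have -> : f t - E f t = (f x - E f t) - (f x - f t) by ring.
      apply: le_lt_trans (ler_normB _ _) _; lra.
    by rewrite -hx; exact: a3 I.
  have nW := closed_map_nbhs K L phi (S°) y0 cK hL cphi (open_interior _) hW.
  apply: filterS (filterI h1 nW) => t [a1 a2] Lt.
  rewrite /Pn (mem_set Hy0).
  case: (boolP (t \in CB_iter k.+1)) => [/set_mem Ht|Ht].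
    have := a1 Ht; lra.
  have [b1 b2] := interior_subset (a2 (s t) (hs t)) (sK t Lt).
  set u := f (s t) - E f (s t).
  have -> : P f y0 - (u + E (P f \o phi) (s t)) = (P f y0 - E (P f \o phi) (s t)) - u by ring.
  apply: le_lt_trans (ler_normB _ _) _; lra.
- move=> a f g cf cg y Ly; rewrite /Pn.
  case: (boolP (y \in CB_iter k.+1)) => [/set_mem Hy|Hy].
    by apply: Pc => //; apply: CFsub.
  rewrite (Ec a f g (CFsub f cf) (CFsub g cg)).
  rewrite (Ea (P (fun x => a * f x + g x) \o phi) (fun x => a * (P f \o phi) x + (P g \o phi) x)); last 2 first.
  + exact: (CFG _ (CF_lin _ _ _ _ _ a cf cg)).
  + by move=> x Bx /=; apply: Pc => //; apply: CFsub.
  rewrite (Ec a _ _ (CFG f cf) (CFG g cg)).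
  by rewrite mulrDr mulrBr; lra.
- move=> f c cf hb y Ly.
  have c0 : 0 <= c by apply: le_trans (normr_ge0 _) (hb _ (sK y Ly)).
  have hbB : forall x, B x -> `|f x| <= c by move=> x Bx; apply: hb; apply: sub.
  have leC : C * c <= Num.max C (1 + CE + CE * C) * c.
    by apply: ler_wpM2r => //; rewrite le_max lexx.
  have leD : (1 + CE + CE * C) * c <= Num.max C (1 + CE + CE * C) * c.
    by apply: ler_wpM2r => //; rewrite le_max lexx orbT.
  rewrite /Pn.
  case: (boolP (y \in CB_iter k.+1)) => [/set_mem Hy|Hy].
    by apply: le_trans leC; apply: (Pd f c) => //; exact: CFsub.
  apply: le_trans leD.
  have h1 := hb _ (sK y Ly).
  have h2 := Ed f c (CFsub f cf) hbB (s y) I.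
  have h3 := Ed (P f \o phi) (C * c) (CFG f cf)
     (fun x Bx => Pd f c (CFsub f cf) hbB (phi x) Bx) (s y) I.
  have t1 := ler_normD (f (s y) - E f (s y)) (E (P f \o phi) (s y)).
  have t2 := ler_normB (f (s y)) (E f (s y)).
  nra.
- move=> g cg y Ly; rewrite /Pn.
  have cgB : CF (CB_iter k.+1) g := continuous_subspaceW (@CB_sub _ k) cg.
  case: (boolP (y \in CB_iter k.+1)) => [/set_mem Hy|Hy].
    by apply: Pe.
  have cgp : CF (phi @^-1` CB_iter k) (g \o phi) := comp_within _ _ _ _ _ _ _ cphi (fun x Hx => Hx) cg.
  rewrite (Ea (P (g \o phi) \o phi) (g \o phi) (CFG _ cgp)).
    by rewrite subrK /= hs.
  by move=> x Bx /=; apply: Pe.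
Qed.

Theorem corollary2p5 (R : realType) (K L : topologicalType)
  (phi : K -> L) :
  compact [set: K] -> hausdorff_space K ->
  compact [set: L] -> hausdorff_space L ->
  continuous phi -> (forall y : L, exists x : K, phi x = y) ->
  extension_property R K -> scattered L -> finite_height L ->
  (* phi^* C(L) is complemented in C(K) *)
  (exists Q : (K -> R) -> (K -> R),
      bounded_linear_op setT setT Q /\
      (forall h, CF setT h ->
         exists g : L -> R, CF setT g /\ Q h = g \o phi) /\
      (forall g : L -> R, CF setT g -> Q (g \o phi) = g \o phi)) /\
  (* phi admits an averaging operator *)
  (exists P : (K -> R) -> (L -> R),
      bounded_linear_op setT setT P /\
      (forall f : L -> R, CF setT f -> P (f \o phi) = f)).
Proof.
move=> cK hK cL hL cphi surj eK _ [n Hn].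
pose s := fun y => proj1_sig (cid (surj y)).
have hs : forall y, phi (s y) = y := fun y => proj2_sig (cid (surj y)).
have Cn : Claim R phi n.
  exists (fun _ _ => 0), 0; rewrite Hn; split => //.
  move=> f _; exact: continuous_subspace0.
have key : forall m, (m <= n)%N -> Claim R phi (n - m).
  elim=> [|m IH] hm; first by rewrite subn0.
  have := IH (ltnW hm); rewrite -(subnSK hm); exact: step.
have := key n (leqnn n); rewrite subnn.
have E0 : phi @^-1` (CB_iter 0 : set L) = setT by rewrite /CB_iter /= preimage_setT.
have L0 : (CB_iter 0 : set L) = setT by [].
rewrite /Claim E0 L0 => -[P [C [Pa Pb Pc Pd Pe]]].
split.
- exists (fun h => P h \o phi); split; [split| split].
  + move=> f g _ fg; have -> // : f = g by apply: funext => z; exact: fg.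
  + move=> f cf; exact: (comp_within _ _ _ _ _ _ _ cphi (fun _ _ => I) (Pb f cf)).
  + by move=> a f g cf cg; apply: funext => x /=; apply: Pc.
  + by exists C => f c cf hb y _ /=; apply: Pd.
  + by move=> h ch; exists (P h); split => //; exact: Pb.
  + by move=> g cg; apply: funext => x /=; rewrite Pe.
- exists P; split; [split|].
  + move=> f g _ fg; have -> // : f = g by apply: funext => z; exact: fg.
  + exact: Pb.
  + by move=> a f g cf cg; apply: funext => x /=; apply: Pc.
  + by exists C => f c cf hb y _ /=; apply: Pd.
  + by move=> f cf; apply: funext => y; apply: Pe.
Qed.
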